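(* Let $n\ge4$ be even. For each $1\le i\le n-1$, $Y_i=\{z\in\mathcal F_n: z(1)=i+1\}$. Consequently $\mathcal F_n=Y_1\sqcup Y_2\sqcup\cdots\sqcup Y_{n-1}$.
   Context: $\mathcal F_m$ is the set of fixed-point-free involutions in $S_m$; $s_i=(i,i+1)$; permutations compose right to left and $z(i)$ is the image of $i$. Regard $\mathcal F_{n-2}\subset S_n$ (fixing $n-1,n$). With $w_0$ the longest element of $S_n$, $\rho(z)=w_0zs_{n-1}w_0$ for $z\in\mathcal F_{n-2}$, $Y_1=\rho(\mathcal F_{n-2})$, $\sigma_i=s_is_{i-1}\cdots s_1$, and $Y_i=\sigma_iY_1\sigma_i^{-1}$. *)

(* Defs.v *)
From mathcomp Require Import all_boot all_fingroup.
Set Implicit Arguments. Unset Strict Implicit. Unset Printing Implicit Defensive.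
Import GroupScope.

(* Conventions: the paper's points 1..n are the ordinals 0..n-1 of 'I_n
   (paper point k  <->  ordinal of value k-1).  Permutations compose right
   to left as in the paper: (comp x y) a = x (y a).  Note mathcomp's own
   group product is left-to-right: (x * y) a = y (x a). *)

Definition comp {n} (x y : 'S_n) : 'S_n := y * x.

(* The 1-indexed value z(k) (as a nat in 1..n); 0 if k is out of range. *)
Definition app {n} (z : 'S_n) (k : nat) : nat :=
  match (insub k.-1 : option 'I_n) with Some a => (z a).+1 | None => 0 end.

(* s_i = (i, i+1) (1-indexed), i.e. the transposition of ordinals i-1, i;
   identity if out of range. *)
Definition s (n i : nat) : 'S_n :=
  match (insub i.-1 : option 'I_n), (insub i : option 'I_n) with
  | Some a, Some b => tperm a b
  | _, _ => 1
  end.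

Definition w0 (n : nat) : 'S_n := perm (@rev_ord_inj n).

Definition fpf_inv (n : nat) : {set 'S_n} :=
  [set z : 'S_n | (z * z == 1) && [forall x, z x != x]].

(* F_{n-2} regarded inside S_n (fixing n-1 and n): involutions of S_n fixing
   the points n-1, n and having no other fixed point. *)
Definition fpf_inv_sub (n : nat) : {set 'S_n} :=
  [set z : 'S_n | (z * z == 1) &&
     [forall x : 'I_n, (z x == x) == (n - 2 <= val x)]].

Definition rho {n} (z : 'S_n) : 'S_n :=
  comp (w0 n) (comp (comp z (s n (n - 1))) (w0 n)).

Definition Y1 (n : nat) : {set 'S_n} := [set rho z | z in fpf_inv_sub n].

Fixpoint sigma (n i : nat) : 'S_n :=
  match i with 0 => 1 | i'.+1 => comp (s n i) (sigma n i') end.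

Definition Y (n i : nat) : {set 'S_n} :=
  [set comp (sigma n i) (comp y (sigma n i)^-1) | y in Y1 n].

(* Main.v *)
Require Import Defs.
From mathcomp Require Import all_boot all_fingroup zify.
Set Implicit Arguments. Unset Strict Implicit. Unset Printing Implicit Defensive.


Lemma compE n (x y : 'S_n) a : Defs.comp x y a = x (y a).
Proof. by rewrite /Defs.comp permM. Qed.

Lemma w0_val n (a : 'I_n) : val (w0 n a) = n - (val a).+1.
Proof. by rewrite /w0 permE. Qed.

Lemma w0K n a : w0 n (w0 n a) = a.
Proof. apply: val_inj; rewrite !w0_val /=; have := ltn_ord a; lia. Qed.

Lemma s_val n i (a : 'I_n) : 0 < i < n ->
  val (s n i a) = if val a == i.-1 then i else if val a == i then i.-1 else val a.
Proof.
move=> /andP[h0 h1]; rewrite /s.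
case: insubP => [b _ vb|]; last by rewrite (leq_ltn_trans (leq_pred i) h1).
case: insubP => [c _ vc|]; last by rewrite h1.
case: tpermP => [->|->|na nb].
- by rewrite vb vc eqxx.
- rewrite vb vc; case: eqP => [|_]; [lia | by rewrite eqxx].
- rewrite -vb -vc !(inj_eq val_inj).
  by move/eqP/negbTE: na => ->; move/eqP/negbTE: nb => ->.
Qed.

Lemma sK n i a : 0 < i < n -> s n i (s n i a) = a.
Proof.
move=> h; apply: val_inj; rewrite !s_val //.
by repeat (case: eqP => /=); lia.
Qed.

Lemma s_fix n i (a : 'I_n) : 0 < i < n -> val a != i.-1 -> val a != i -> s n i a = a.
Proof.
move=> h h1 h2; apply: val_inj; rewrite s_val //.
by rewrite (negbTE h1) (negbTE h2).
Qed.

Lemma sigma_val n i (a : 'I_n) : 1 <= i < n ->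
  (val a = 0 -> val (sigma n i a) = i) /\ (val a = 1 -> val (sigma n i a) = 0).
Proof.
elim: i a => [|i IH] a // /andP[h1 h2].
have -> : sigma n i.+1 = Defs.comp (s n i.+1) (sigma n i) by [].
have hs : 0 < i.+1 < n by apply/andP; split; lia.
case: i IH h1 h2 hs => [|i] IH h1 h2 hs.
- rewrite compE /= perm1 !s_val //=; split => ha; by rewrite ha.
- have hi : 0 < i.+1 < n by apply/andP; split; lia.
  have [I0 I1] := IH a hi.
  rewrite compE !s_val //; split => ha.
  + by rewrite (I0 ha) eqxx.
  + rewrite (I1 ha); case: eqP => //; lia.
Qed.

Lemma fpfP n (z : 'S_n) :
  reflect ((forall a, z (z a) = a) /\ (forall a, z a != a)) (z \in fpf_inv n).
Proof.
rewrite inE; apply: (iffP andP) => [[/eqP zz /forallP fp]|[zz fp]]; split => //.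
- by move=> a; rewrite -permM zz perm1.
- by apply/eqP/permP => a; rewrite permM zz perm1.
- exact/forallP.
Qed.

Lemma conj_fpf n (g z : 'S_n) : z \in fpf_inv n -> Defs.comp g (Defs.comp z (g^-1)%g) \in fpf_inv n.
Proof.
move/fpfP=> [zz fp]; apply/fpfP; split=> a; rewrite !compE.
- by rewrite permK zz permKV.
- apply/negP => /eqP h; move/eqP: (fp ((g^-1)%g a)); apply.
  apply: (perm_inj (s:=g)); by rewrite permKV.
Qed.
Ltac li := simpl in *; lia.

Lemma Y1_char n (y : 'S_n) (a0 : 'I_n) : 4 <= n -> val a0 = 0 ->
  (y \in Y1 n) = (y \in fpf_inv n) && (val (y a0) == 1).
Proof.
move=> hn ha0.
have hs : 0 < n - 1 < n by apply/andP; split; li.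
have sv := fun b => s_val b hs.
have sK' := fun b => sK b hs.
apply/imsetP/andP.
- case=> x; rewrite inE => /andP[/eqP xx /forallP xf] ->.
  have xxa : forall b, x (x b) = b by move=> b; rewrite -permM xx perm1.
  have xfix : forall b : 'I_n, n - 2 <= val b -> x b = b.
    by move=> b hb; have := xf b; rewrite hb => /eqP/eqP.
  have xnf : forall b : 'I_n, val b < n - 2 -> x b != b.
    by move=> b hb; have := xf b; rewrite leqNgt hb /= => /eqP ->.
  have xs : forall b, x (s n (n-1) (x (s n (n-1) b))) = b.
    move=> b; have := ltn_ord b; case: (ltnP (val b) (n-2)) => hb hbn.
    + have e1 : s n (n-1) b = b by apply: (s_fix hs); li.
      have hc : val (x b) < n - 2.
        rewrite ltnNge; apply/negP => hc; move: (xxa b); rewrite (xfix _ hc) => e.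
        by move: (xnf b hb); rewrite e eqxx.
      have e2 : s n (n-1) (x b) = x b by apply: (s_fix hs); li.
      by rewrite e1 e2 xxa.
    + rewrite (xfix (s n (n-1) b)) ?sK' ?xfix //.
      rewrite sv; case: eqP => ?; first li; case: eqP => ?; li.
  split.
  + apply/fpfP; split=> a; rewrite /rho !compE.
    * by rewrite w0K xs w0K.
    * apply/negP => /eqP h.
      have h' : x (s n (n-1) (w0 n a)) = w0 n a by rewrite -{2}h w0K.
      move: h'; set b := w0 n a => h'.
      case: (ltnP (val b) (n-2)) => hb.
      - have e1 : s n (n-1) b = b by apply: (s_fix hs); li.
        by move: (xnf b hb); rewrite -{1}e1 h' eqxx.
      - move: h'; rewrite xfix; last first.
          rewrite sv; case: eqP => ?; first li; case: eqP => ?; li.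
        move/(congr1 val); rewrite sv; have := ltn_ord b.
        case: eqP => ?; first li; case: eqP => ?; li.
  + rewrite /rho !compE; apply/eqP.
    have e0 : val (w0 n a0) = n - 1 by rewrite w0_val ha0; li.
    have e1 : val (s n (n-1) (w0 n a0)) = n - 2.
      by rewrite sv e0; case: eqP => ?; first li; rewrite eqxx; li.
    rewrite w0_val xfix e1 //; li.
- case=> /fpfP[yy yf] /eqP y01.
  exists (Defs.comp (w0 n) (Defs.comp (Defs.comp y (w0 n)) (s n (n-1)))); last first.
    by apply/permP => a; rewrite /rho !compE sK' !w0K.
  have hu1 : forall b : 'I_n, val b = n - 1 -> val (w0 n (y (w0 n b))) = n - 2.
    move=> b hb; rewrite (_ : w0 n b = a0) ?w0_val ?y01; first li.
    by apply: val_inj; rewrite w0_val ha0 hb; li.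
  have hu2 : forall b : 'I_n, val b = n - 2 -> val (w0 n (y (w0 n b))) = n - 1.
    move=> b hb; rewrite (_ : w0 n b = y a0) ?yy ?w0_val; first li.
    by apply: val_inj; rewrite w0_val y01 hb; li.
  have huu : forall b, w0 n (y (w0 n (w0 n (y (w0 n b))))) = b.
    by move=> b; rewrite w0K yy w0K.
  have hunf : forall b, w0 n (y (w0 n b)) != b.
    move=> b; apply/eqP => h; move: (yf (w0 n b)); by rewrite -{2}h w0K eqxx.
  have cases : forall b : 'I_n, val b < n - 2 \/ val b = n - 2 \/ val b = n - 1.
    by move=> b; have := ltn_ord b; li.
  have sfx : forall b : 'I_n, val b < n - 2 -> s n (n-1) b = b.
    by move=> b hb; apply: (s_fix hs); li.
  have s1 : forall b : 'I_n, val b = n - 2 -> val (s n (n-1) b) = n - 1.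
    by move=> b hb; rewrite sv hb; case: eqP => ?; li.
  have s2 : forall b : 'I_n, val b = n - 1 -> val (s n (n-1) b) = n - 2.
    by move=> b hb; rewrite sv hb; case: eqP => ?; first li; rewrite eqxx; li.
  rewrite inE; apply/andP; split.
  + apply/eqP/permP => b; rewrite permM perm1 !compE.
    case: (cases b) => [hb|[hb|hb]].
    * rewrite (sfx b hb).
      have hc : val (w0 n (y (w0 n b))) < n - 2.
        case: (cases (w0 n (y (w0 n b)))) => [//|[hc|hc]].
        - by move: (hu2 _ hc); rewrite huu; li.
        - by move: (hu1 _ hc); rewrite huu; li.
      by rewrite (sfx _ hc) huu.
    * apply: val_inj; rewrite hb.
      exact: (hu1 _ (s1 _ (hu1 _ (s1 _ hb)))).
    * apply: val_inj; rewrite hb.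
      exact: (hu2 _ (s2 _ (hu2 _ (s2 _ hb)))).
  + apply/forallP => b; rewrite !compE.
    case: (cases b) => [hb|[hb|hb]].
    * rewrite (sfx b hb) (negbTE (hunf b)); apply/eqP; apply/esym/negbTE; li.
    * have -> : w0 n (y (w0 n (s n (n - 1) b))) == b.
        by apply/eqP/val_inj; rewrite hb; exact: (hu1 _ (s1 _ hb)).
      rewrite hb; apply/eqP; apply/esym; li.
    * have -> : w0 n (y (w0 n (s n (n - 1) b))) == b.
        by apply/eqP/val_inj; rewrite hb; exact: (hu2 _ (s2 _ hb)).
      rewrite hb; apply/eqP; apply/esym; li.
Qed.

Lemma mem_bigcup_seq (T : finType) (r : seq nat) (F : nat -> {set T}) x :
  reflect (exists2 i, i \in r & x \in F i) (x \in \bigcup_(i <- r) F i).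
Proof.
elim: r => [|a r IH]; first by rewrite big_nil inE; constructor; case.
rewrite big_cons; apply: (iffP setUP) => [[h|/IH[i ir h]]|[i]].
- by exists a; [exact: mem_head | done].
- by exists i => //; rewrite inE ir orbT.
- rewrite inE => /orP[/eqP -> h|ir h]; [by left|right; apply/IH; by exists i].
Qed.

Lemma Y_char n i (a0 : 'I_n) : 4 <= n -> val a0 = 0 -> 1 <= i <= n - 1 ->
  Y n i = [set z in fpf_inv n | val (z a0) == i].
Proof.
move=> hn ha0 hi.
have h1 : 1 < n by li.
pose a1 : 'I_n := Ordinal h1.
have hi' : 1 <= i < n by apply/andP; split; li.
have [S0 _] := sigma_val a0 hi'.
have [_ S1] := sigma_val a1 hi'.
have S0' := S0 ha0; have S1' := S1 erefl.
have e1 : sigma n i a1 = a0 by apply: val_inj; rewrite S1'; li.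
have e1' : ((sigma n i)^-1)%g a0 = a1 by rewrite -e1 permK.
apply/setP => z; rewrite inE; apply/imsetP/andP.
- case=> y; rewrite (Y1_char _ hn ha0) => /andP[yf /eqP y01] ->.
  split; first exact: conj_fpf.
  rewrite !compE e1'.
  have ya : y a0 = a1 by apply: val_inj; rewrite y01.
  move/fpfP: yf => [yy _].
  by rewrite -ya yy S0'.
- case=> zf /eqP zi.
  exists (Defs.comp ((sigma n i)^-1)%g (Defs.comp z (sigma n i))).
  + rewrite (Y1_char _ hn ha0); apply/andP; split.
      by have := conj_fpf ((sigma n i)^-1)%g zf; rewrite invgK.
    rewrite !compE.
    have ea : sigma n i a0 = z a0 by apply: val_inj; rewrite zi S0'.
    move/fpfP: zf => [zz _].
    by rewrite ea zz e1'.
  + by apply/permP => a; rewrite !compE !permKV.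
Qed.

Theorem theorem3p3 (n : nat) (hn : 4 <= n) (heven : ~~ odd n) :
  (forall i, 1 <= i <= n - 1 ->
     Y n i = [set z in fpf_inv n | app z 1 == i.+1]) /\
  fpf_inv n = \bigcup_(1 <= i < n) Y n i /\
  (forall i j, 1 <= i <= n - 1 -> 1 <= j <= n - 1 -> i != j ->
     [disjoint Y n i & Y n j]).
Proof.
have h0 : 0 < n by li.
pose a0 : 'I_n := Ordinal h0.
have ha0 : val a0 = 0 by [].
have appE : forall z : 'S_n, app z 1 = (val (z a0)).+1.
  move=> z; rewrite /app /=; case: insubP => [b _ vb|]; last by rewrite h0.
  by congr (S (nat_of_ord (z _))); apply: val_inj.
split.
  move=> i hi; rewrite (Y_char hn ha0 hi); apply/setP => z; by rewrite !inE appE eqSS.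
split.
  apply/setP => z; apply/idP/mem_bigcup_seq.
  - move=> hz; exists (val (z a0)).
      rewrite mem_index_iota; move/fpfP: (hz) => [_ zf].
      have := zf a0; have := ltn_ord (z a0).
      have: (z a0 != a0) = (val (z a0) != val a0) by [].
      move=> ->; rewrite ha0 => ? ?; apply/andP; split; li.
    rewrite (Y_char hn ha0); first by rewrite inE hz eqxx.
    move/fpfP: (hz) => [_ zf].
    have := zf a0; have := ltn_ord (z a0).
    have: (z a0 != a0) = (val (z a0) != val a0) by [].
    move=> ->; rewrite ha0 => ? ?; apply/andP; split; li.
  - case=> i; rewrite mem_index_iota => hi.
    rewrite (Y_char hn ha0); last by apply/andP; split; li.
    by rewrite inE => /andP[].
move=> i j hi hj hij.
rewrite (Y_char hn ha0 hi) (Y_char hn ha0 hj) -setI_eq0; apply/eqP/setP => z.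
rewrite !inE; apply/negbTE/negP => /andP[/andP[_ /eqP a] /andP[_ /eqP b]].
by move: hij; rewrite -a -b eqxx.
Qed.
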